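(* Let $D\ge1$, let $\sigma_I,\sigma_E\in C^2(\mathbb{R}^D)$ and set $\Sigma:=\sigma_I-\sigma_E$. Assume that $\nabla^2_\Xi\Sigma(\Xi)>0$ (positive definite) for all $\Xi$ and that $\nabla_\Xi\Sigma:\mathbb{R}^D\to\mathbb{R}^D$ is onto. Let $G\in C^2(\mathbb{R}^D)$ be a function with $\nabla_\tau G(\tau)=-(\nabla_\Xi\Sigma)^{-1}(-\tau)$ for all $\tau\in\mathbb{R}^D$, and define $$\Psi(\Xi,\tau):=\sigma_I(\Xi)+\Xi\cdot\tau+G(\tau),\qquad (\Xi,\tau)\in\mathbb{R}^D\times\mathbb{R}^D .$$ Assume moreover that there are constants $\gamma_I>\gamma_v>0$ such that, for all $\Xi\in\mathbb{R}^D$, $$\nabla^2_\Xi\sigma_I(\Xi)\ \ge\ \gamma_I\,\mathbb{I}_D\ >\ \gamma_v\,\mathbb{I}_D\ \ge\ \nabla^2_\Xi\Sigma(\Xi)\ >\ 0$$ in the sense of symmetric matrices. Then there is $\delta>0$ such that $\nabla^2_{(\Xi,\tau)}\Psi(\Xi,\tau)\ge\delta\,\mathbb{I}_{2D}$ for all $(\Xi,\tau)\in\mathbb{R}^D\times\mathbb{R}^D$.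
   Context: Under the stated hypotheses $\nabla_\Xi\Sigma$ is a bijection of $\mathbb{R}^D$ with $C^1$ inverse $(\nabla_\Xi\Sigma)^{-1}$, whose Jacobian is symmetric, so a function $G$ with the stated gradient exists (unique up to an additive constant). $\mathbb{I}_k$ denotes the $k\times k$ identity matrix; inequalities between symmetric matrices are in the sense of quadratic forms. In the paper's application $D=19$ (three space dimensions) or $D=5$ (two space dimensions). *)

(* Defs.v *)
From HB Require Import structures.
From mathcomp Require Import all_boot all_order all_algebra.
From mathcomp Require Import all_classical all_reals all_analysis.
Set Implicit Arguments. Unset Strict Implicit. Unset Printing Implicit Defensive.
Import Order.TTheory GRing.Theory Num.Theory.
Import numFieldNormedType.Exports.
Local Open Scope ring_scope.

Definition ebasis (R : realType) (n : nat) (i : 'I_n) : 'rV[R]_n := delta_mx 0 i.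

Definition partial (R : realType) (n : nat) (i : 'I_n) (f : 'rV[R]_n -> R)
  : 'rV[R]_n -> R := fun x => 'D_(ebasis R i) f x.

Definition C2 (R : realType) (n : nat) (f : 'rV[R]_n -> R) : Prop :=
  continuous f /\
  (forall i x, derivable f x (ebasis R i)) /\
  (forall i, continuous (partial i f)) /\
  (forall i j x, derivable (partial i f) x (ebasis R j)) /\
  (forall i j, continuous (partial j (partial i f))).

Definition gradient (R : realType) (n : nat) (f : 'rV[R]_n -> R) (x : 'rV[R]_n)
  : 'rV[R]_n := \row_i partial i f x.

Definition hessian (R : realType) (n : nat) (f : 'rV[R]_n -> R) (x : 'rV[R]_n)
  : 'M[R]_n := \matrix_(i, j) partial j (partial i f) x.

Definition qform (R : realType) (n : nat) (A : 'M[R]_n) (v : 'rV[R]_n) : R :=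
  (v *m A *m v^T) 0 0.

Definition mx_ge (R : realType) (n : nat) (A B : 'M[R]_n) : Prop :=
  forall v : 'rV[R]_n, qform B v <= qform A v.

Definition mx_posdef (R : realType) (n : nat) (A : 'M[R]_n) : Prop :=
  forall v : 'rV[R]_n, v != 0 -> 0 < qform A v.

Definition dotv (R : realType) (n : nat) (u v : 'rV[R]_n) : R := (u *m v^T) 0 0.

Definition Psi (R : realType) (D : nat) (sigmaI G : 'rV[R]_D -> R)
  (z : 'rV[R]_(D + D)) : R :=
  sigmaI (lsubmx z) + dotv (lsubmx z) (rsubmx z) + G (rsubmx z).

(* Main.v *)
Require Import Defs.
From HB Require Import structures.
From mathcomp Require Import all_boot all_order all_algebra.
From mathcomp Require Import all_classical all_reals all_analysis.
From mathcomp Require Import ring lra.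
Import Order.TTheory GRing.Theory Num.Theory.
Import numFieldNormedType.Exports.
Local Open Scope ring_scope.
Local Open Scope classical_set_scope.

Section Gen.
Variables (R : realType) (V : normedModType R).
Implicit Types (f : V -> R).

Lemma line_quot f y v t :
  (fun h : R => h^-1 *: (((fun s : R => f (y + s *: v)) \o shift t) (h *: 1) - f (y + t *: v))) =
  (fun h : R => h^-1 *: ((f \o shift (y + t *: v)) (h *: v) - f (y + t *: v))).
Proof.
apply: funext => h /=; congr (_ *: (f _ - _)).
by rewrite /= [_%:A]mulr1 scalerDl addrCA addrA.
Qed.

Lemma line_derivable f y v t : derivable f (y + t *: v) v ->
  derivable (fun s : R => f (y + s *: v)) t 1.
Proof. by rewrite /derivable line_quot. Qed.

Lemma line_derive f y v t :
  'D_1 (fun s : R => f (y + s *: v)) t = 'D_v f (y + t *: v).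
Proof. by rewrite /derive line_quot. Qed.

Lemma mvt0 (g : R -> R) (b : R) : (forall t, derivable g t 1) ->
  exists c, `|c| <= `|b| /\ g b - g 0 = 'D_1 g c * b.
Proof.
move=> dg.
have cg : continuous g.
  by move=> t; apply: differentiable_continuous; apply/derivable1_diffP.
have idg : forall x : R, is_derive x (1 : R) g ('D_1 g x) by move=> x; apply: derivableP.
case: (leP 0 b) => hb.
  have [c cin E] := MVT_segment hb (fun x _ => idg x) (continuous_subspaceT cg).
  exists c; split; last by rewrite E subr0.
  move: cin; rewrite in_itv /= => /andP[c0 cb].
  by rewrite !ger0_norm // (le_trans c0 cb).
have [c cin E] := MVT_segment (ltW hb) (fun x _ => idg x) (continuous_subspaceT cg).
exists c; split.
  move: cin; rewrite in_itv /= => /andP[bc c0].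
  by rewrite !ler0_norm // ?lerN2 // ltW.
by rewrite -opprB E sub0r mulrN opprK.
Qed.
Lemma dir_add_cvg f v w x (a : R) :
  (forall y, derivable f y v) -> continuous ('D_v f) -> derivable f x w ->
  (fun h : R => h^-1 *: ((f \o shift x) (h *: (a *: v + w)) - f x)) @ 0^'
     --> a * 'D_v f x + 'D_w f x.
Proof.
move=> dv cv dw.
set A := fun h : R => h^-1 *: (f (h *: w + x + (h * a) *: v) - f (h *: w + x)).
set B := fun h : R => h^-1 *: ((f \o shift x) (h *: w) - f x).
have -> : (fun h : R => h^-1 *: ((f \o shift x) (h *: (a *: v + w)) - f x)) = A + B.
  apply: funext => h; rewrite -[RHS]/(A h + B h) /A /B /= -scalerDr; congr (_ *: _).
  rewrite addrA subrK; congr (f _ - _).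
  by rewrite scalerDr scalerA [RHS]addrC addrA.
apply: (@cvgD _ _ _ (0^') _ A B); last exact: dw.
apply/cvgrPdist_lt => e e0.
have ea0 : 0 < e / (`|a| + 1) by rewrite divr_gt0 // ltr_wpDl.
have := cv x; move/cvgrPdist_lt/(_ _ ea0)/nbhs_normP => [r /= r0 Hr].
have rd0 : 0 < r / (`|w| + `|a| * `|v| + 1).
  by rewrite divr_gt0 // ltr_wpDl // addr_ge0 // mulr_ge0.
near=> h.
have hn0 : h != 0 by near: h; exact: nbhs_dnbhs_neq.
have hlt : `|h| < r / (`|w| + `|a| * `|v| + 1) by near: h; exact: dnbhs0_lt.
have dg : forall t, derivable (fun s : R => f (h *: w + x + s *: v)) t 1.
  by move=> t; apply: line_derivable.
have [c [hc Ec]] := mvt0 _ (h * a) dg.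
rewrite /A -[f (h *: w + x)](congr1 f (addr0 (h *: w + x))) -(scale0r v) Ec line_derive /=.
have -> : h^-1 *: ('D_v f (h *: w + x + c *: v) * (h * a)) = a * 'D_v f (h *: w + x + c *: v).
  by rewrite -[h^-1 *: _]/(h^-1 * _); field.
rewrite -mulrBr normrM.
have : `|x - (h *: w + x + c *: v)| < r.
  have -> : x - (h *: w + x + c *: v) = - (h *: w + c *: v).
    by rewrite (addrAC (h *: w)) opprD addrA addrAC subrr add0r.
  rewrite normrN.
  apply: (le_lt_trans (ler_normD _ _)); rewrite !normrZ.
  apply: (le_lt_trans (y := `|h| * (`|w| + `|a| * `|v|))).
    rewrite mulrDr mulrA lerD2l ler_wpM2r //.
    by move: hc; rewrite normrM.
  move: hlt; rewrite ltr_pdivlMr ?ltr_wpDl ?addr_ge0 ?mulr_ge0 // => hlt.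
  apply: le_lt_trans hlt; rewrite ler_wpM2l // lerDl //.
move=> /Hr /= H.
apply: (le_lt_trans (y := `|a| * (e / (`|a| + 1)))).
  by rewrite ler_wpM2l // ltW.
rewrite mulrCA gtr_pMr // ltr_pdivrMr ?ltr_wpDl // mul1r ltrDl //.
Unshelve. all: by end_near.
Qed.
Lemma dir_add f v w x (a : R) :
  (forall y, derivable f y v) -> continuous ('D_v f) -> derivable f x w ->
  derivable f x (a *: v + w) /\ 'D_(a *: v + w) f x = a * 'D_v f x + 'D_w f x.
Proof.
move=> dv cv dw; have H := dir_add_cvg f v w x a dv cv dw.
split; first by apply/cvg_ex; eexists; exact: H.
exact: cvg_lim H.
Qed.
End Gen.

Section Mx.
Variable R : realType.

Lemma total_deriv n (f : 'rV[R]_n -> R) :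
  (forall i y, derivable f y (ebasis R i)) -> (forall i, continuous (partial i f)) ->
  forall d x, derivable f x d /\ 'D_d f x = \sum_i d 0 i * partial i f x.
Proof.
move=> dp cp d.
suff H : forall (s : seq 'I_n) x, derivable f x (\sum_(i <- s) d 0 i *: ebasis R i) /\
    'D_(\sum_(i <- s) d 0 i *: ebasis R i) f x = \sum_(i <- s) d 0 i * partial i f x.
  by move=> x; have := H (index_enum 'I_n) x; rewrite -row_sum_delta.
elim=> [|i s IH] x.
  by rewrite !big_nil; split; [exact: derivable0 | exact: derive0].
rewrite !big_cons; have [d1 d2] := IH x.
have [H1 H2] := @dir_add R _ f (ebasis R i) _ x (d 0 i) (dp i) (cp i) d1.
by split => //; rewrite H2 d2.
Qed.
Lemma bil_sum n (u v : 'rV[R]_n) (A : 'M[R]_n) :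
  (u *m A *m v^T) 0 0 = \sum_i \sum_j u 0 i * A i j * v 0 j.
Proof.
rewrite mxE exchange_big /=; apply: eq_bigr => j _.
rewrite mxE big_distrl /=; apply: eq_bigr => i _.
by rewrite mxE.
Qed.

Lemma fsumE n (h : 'I_n -> 'rV[R]_n -> R) y : (\sum_i h i) y = \sum_i h i y.
Proof. by elim/big_rec2: _ => // i a b _ <-. Qed.

Lemma second_deriv n (f : 'rV[R]_n -> R) : C2 f ->
  forall u v y, derivable ('D_u f) y v /\
     'D_v ('D_u f) y = (u *m hessian f y *m v^T) 0 0.
Proof.
move=> [_ [dp [cp [ddp cdp]]]] u v y.
have E : 'D_u f = \sum_i (u 0 i \*: partial i f).
  apply: funext => z; rewrite fsumE (total_deriv _ _ dp cp u z).2.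
  by apply: eq_bigr.
have dd : forall i, derivable (u 0 i \*: partial i f) y v.
  move=> i; apply: derivableZ; exact: (total_deriv _ _ (ddp i) (cdp i) v y).1.
rewrite E; split; first exact: derivable_sum.
rewrite derive_sum // bil_sum; apply: eq_bigr => i _.
rewrite deriveZ; last exact: (total_deriv _ _ (ddp i) (cdp i) v y).1.
rewrite (total_deriv _ _ (ddp i) (cdp i) v y).2 [_ *: _]big_distrr /=.
by apply: eq_bigr => j _; rewrite /hessian mxE [v 0 j * _]mulrC mulrA.
Qed.
Lemma mono01 (g : R -> R) : (forall t, derivable g t 1) ->
  (forall t, 0 <= t <= 1 -> 'D_1 g t <= 0) -> forall s, 0 <= s <= 1 -> g s <= g 0.
Proof.
move=> dg dn s /andP[s0 s1].
have cg : continuous g.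
  by move=> t; apply: differentiable_continuous; apply/derivable1_diffP.
apply: (@ler0_derive1_le_cc R g 0 1) => //.
- move=> x; rewrite in_itv /= => /andP[x0 x1]; rewrite derive1E; apply: dn.
  by rewrite !ltW.
- exact: continuous_subspaceT.
- by rewrite in_itv /= s0 s1.
- by rewrite in_itv /= lexx ler01.
Qed.

Lemma taylor1 (h : R -> R) (C : R) : (forall t, derivable h t 1) ->
  (forall t, derivable ('D_1 h) t 1) ->
  (forall t, 0 <= t <= 1 -> 'D_1 ('D_1 h) t <= C) ->
  h 1 <= h 0 + 'D_1 h 0 + C / 2.
Proof.
move=> dh ddh hC.
pose k := 'D_1 h - C \*: id.
have kd : forall t : R, is_derive t 1 k ('D_1 ('D_1 h) t - C *: 1).
  move=> t; apply: is_deriveB; exact: derivableP.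
have kle : forall s, 0 <= s <= 1 -> k s <= k 0.
  apply: mono01; first by move=> t; case: (kd t).
  move=> t /hC Ht; have [_ ->] := kd t.
  by rewrite [C *: 1]mulr1 subr_le0.
pose p := h - ('D_1 h 0) \*: id - (C / 2) \*: (id * id).
have pd : forall t : R, is_derive t 1 p ('D_1 h t - 'D_1 h 0 *: 1 - (C / 2) *: (t *: 1 + t *: 1)).
  by move=> t; apply: is_deriveB; apply: is_deriveB; exact: derivableP.
have := @mono01 p _ _ 1.
have H1 : forall t, derivable p t 1 by move=> t; case: (pd t).
have H2 : forall t, 0 <= t <= 1 -> 'D_1 p t <= 0.
  move=> t Ht; have [_ ->] := pd t.
  have := kle t Ht; rewrite /k /= !fctE /=.
  rewrite /GRing.scale /= ?mulr1 ?mul1r mulr0 subr0.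
  have -> : C / 2 * (t + t) = C * t by field.
  lra.
move=> /(_ H1 H2); rewrite lexx ler01 => /(_ isT).
rewrite /p /= !fctE /= /GRing.scale /= ?mulr1 ?mulr0.
lra.
Qed.

Lemma taylor1_lb (h : R -> R) (C : R) : (forall t, derivable h t 1) ->
  (forall t, derivable ('D_1 h) t 1) ->
  (forall t, 0 <= t <= 1 -> C <= 'D_1 ('D_1 h) t) ->
  h 0 + 'D_1 h 0 + C / 2 <= h 1.
Proof.
move=> dh ddh hC.
have E1 : 'D_1 (- h) = - 'D_1 h.
  by apply: funext => t; rewrite deriveN.
have H := @taylor1 (- h) (- C).
have d1 : forall t, derivable (- h) t 1 by move=> t; apply: derivableN.
have d2 : forall t, derivable ('D_1 (- h)) t 1 by move=> t; rewrite E1; apply: derivableN.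
have d3 : forall t, 0 <= t <= 1 -> 'D_1 ('D_1 (- h)) t <= - C.
  by move=> t Ht; rewrite E1 deriveN // lerN2; apply: hC.
have E0 : 'D_1 (fun x : R => - h x) 0 = - 'D_1 h 0 by exact: deriveN.
have := H d1 d2 d3; rewrite /= !fctE E0.
lra.
Qed.

Lemma C2_line n (f : 'rV[R]_n -> R) (a d : 'rV[R]_n) : C2 f ->
  let hl := fun t : R => f (a + t *: d) in
  [/\ forall t, derivable hl t 1, forall t, derivable ('D_1 hl) t 1,
     forall t, 'D_1 ('D_1 hl) t = qform (hessian f (a + t *: d)) d &
     'D_1 hl 0 = 'D_d f a].
Proof.
move=> C2f hl; have [cf [dp [cp [ddp cdp]]]] := C2f.
have dfd : forall y, derivable f y d by move=> y; exact: (total_deriv _ _ dp cp d y).1.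
have ddfd : forall y, derivable ('D_d f) y d.
  by move=> y; exact: (second_deriv _ _ C2f d d y).1.
have E1 : 'D_1 hl = fun t => 'D_d f (a + t *: d).
  by apply: funext => t; exact: (@line_derive R _ f a d t).
split.
- by move=> t; exact: (@line_derivable R _ f a d t).
- move=> t; exact: (eq_ind _ (fun g => derivable g t 1)
     (@line_derivable R _ ('D_d f) a d t (ddfd _)) _ (esym E1)).
- move=> t; transitivity ('D_1 (fun s : R => 'D_d f (a + s *: d)) t).
    exact: (f_equal (fun g => 'D_1 g t) E1).
  rewrite (@line_derive R _ ('D_d f) a d t).
  exact: (second_deriv _ _ C2f d d _).2.
- transitivity ((fun s : R => 'D_d f (a + s *: d)) 0).
    exact: (f_equal (fun g => g 0) E1).
  by rewrite /= scale0r addr0.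
Qed.

Lemma C2_taylor n (f : 'rV[R]_n -> R) (a d : 'rV[R]_n) (C : R) : C2 f ->
  (forall x, qform (hessian f x) d <= C) -> f (a + d) <= f a + 'D_d f a + C / 2.
Proof.
move=> C2f hC; have [d1 d2 d3 d4] := C2_line _ _ a d C2f.
have := taylor1 _ C d1 d2; rewrite d4 /= scale1r scale0r addr0; apply.
by move=> t _; rewrite d3.
Qed.

Lemma C2_taylor_lb n (f : 'rV[R]_n -> R) (a d : 'rV[R]_n) (C : R) : C2 f ->
  (forall x, C <= qform (hessian f x) d) -> f a + 'D_d f a + C / 2 <= f (a + d).
Proof.
move=> C2f hC; have [d1 d2 d3 d4] := C2_line _ _ a d C2f.
have := taylor1_lb _ C d1 d2; rewrite d4 /= scale1r scale0r addr0; apply.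
by move=> t _; rewrite d3.
Qed.

Section Dot.
Variable n : nat.
Implicit Types u v w : 'rV[R]_n.
Lemma dotvDl u w v : dotv (u + w) v = dotv u v + dotv w v.
Proof. by rewrite /dotv mulmxDl mxE. Qed.
Lemma dotvDr u w v : dotv v (u + w) = dotv v u + dotv v w.
Proof. by rewrite /dotv linearD mulmxDr mxE. Qed.
Lemma dotvZl (k : R) u v : dotv (k *: u) v = k * dotv u v.
Proof. by rewrite /dotv -scalemxAl mxE. Qed.
Lemma dotvZr (k : R) u v : dotv v (k *: u) = k * dotv v u.
Proof. by rewrite /dotv linearZ /= -scalemxAr mxE. Qed.
Lemma dotvNl u v : dotv (- u) v = - dotv u v.
Proof. by rewrite /dotv mulNmx mxE. Qed.
Lemma dotvNr u v : dotv v (- u) = - dotv v u.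
Proof. by rewrite /dotv linearN mulmxN mxE. Qed.
Lemma dotvC u v : dotv u v = dotv v u.
Proof. rewrite /dotv !mxE; apply: eq_bigr => i _; rewrite !mxE; exact: mulrC. Qed.
Lemma dotv_sum u v : dotv u v = \sum_i u 0 i * v 0 i.
Proof. by rewrite /dotv mxE; apply: eq_bigr => i _; rewrite mxE. Qed.
End Dot.

Lemma D_grad n (f : 'rV[R]_n -> R) : C2 f -> forall d a, 'D_d f a = dotv d (gradient f a).
Proof.
move=> [_ [dp [cp _]]] d a; rewrite (total_deriv _ _ dp cp d a).2 dotv_sum.
by apply: eq_bigr => i _; rewrite mxE.
Qed.

Lemma cocoercive n (S : 'rV[R]_n -> R) (g : R) : 0 < g -> C2 S ->
  (forall x d, 0 <= qform (hessian S x) d) ->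
  (forall x d, qform (hessian S x) d <= g * dotv d d) ->
  forall a b, dotv (gradient S b - gradient S a) (gradient S b - gradient S a) / g <=
     dotv (gradient S b - gradient S a) (b - a).
Proof.
move=> g0 C2S hpos hub a b.
have ub : forall x d, S (x + d) <= S x + dotv d (gradient S x) + g * dotv d d / 2.
  move=> x d; rewrite -D_grad //; apply: C2_taylor => // y; exact: hub.
have lb : forall x d, S x + dotv d (gradient S x) <= S (x + d).
  move=> x d; have := C2_taylor_lb _ _ x d 0 C2S (fun y => hpos y d).
  by rewrite -D_grad // mul0r addr0.
set u := gradient S b - gradient S a.
have E1 : g * dotv (g^-1 *: u) (g^-1 *: u) = g^-1 * dotv u u.
  rewrite dotvZl dotvZr !mulrA mulfV ?gt_eqF //; by rewrite mul1r.
have h1 := ub b (- (g^-1 *: u)).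
have h2 := lb a (b + - (g^-1 *: u) - a).
have h3 := ub a (g^-1 *: u).
have h4 := lb b (a + g^-1 *: u - b).
rewrite (addrC a) subrK in h2; rewrite (addrC b) subrK in h4.
rewrite !dotvNl !dotvNr opprK E1 dotvZl in h1.
rewrite E1 dotvZl in h3.
rewrite !dotvDl !dotvNl dotvZl in h2.
rewrite !dotvDl !dotvNl dotvZl in h4.
have Pu : g^-1 * dotv u u = g^-1 * dotv u (gradient S b) - g^-1 * dotv u (gradient S a).
  by rewrite -mulrBr -dotvNr -dotvDr.
have Q : dotv u (b - a) = dotv b (gradient S b) - dotv a (gradient S b)
    - dotv b (gradient S a) + dotv a (gradient S a).
  rewrite /u dotvDl dotvNl !dotvDr !dotvNr (dotvC _ b) (dotvC _ a) (dotvC _ b) (dotvC _ a).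
  lra.
rewrite Q mulrC; lra.
Qed.

Lemma G_bound n (S G : 'rV[R]_n -> R) (g : R) : 0 < g -> C2 S -> C2 G ->
  (forall x d, 0 <= qform (hessian S x) d) ->
  (forall x d, qform (hessian S x) d <= g * dotv d d) ->
  (forall tau, gradient S (- gradient G tau) = - tau) ->
  forall tau y, dotv y y / g <= qform (hessian G tau) y.
Proof.
move=> g0 C2S C2G hpos hub hgrad tau y.
have [dd Edd] := second_deriv _ _ C2G y y tau.
rewrite /qform -Edd; apply: limr_ge; first exact: dd.
near=> t.
have tn0 : t != 0 by near: t; exact: nbhs_dnbhs_neq.
have := cocoercive _ _ g g0 C2S hpos hub (- gradient G tau) (- gradient G (t *: y + tau)).
rewrite !hgrad !opprK opprD subrK.
rewrite !dotvNl !dotvNr opprK !dotvZl !dotvZr.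
rewrite /= !(D_grad _ _ C2G) dotvDr dotvNr.
move: (dotv y (gradient G (t *: y + tau))) (dotv y (gradient G tau)) (dotv y y) => X1 X2 P H.
rewrite -[t^-1 *: _]/(t^-1 * _).
rewrite -subr_ge0.
have -> : t^-1 * (X1 - X2) - P / g = t^-1 ^+ 2 * (t * (X1 - X2) - t * (t * P) / g).
  by field; rewrite tn0 gt_eqF.
apply: mulr_ge0; first exact: sqr_ge0.
rewrite subr_ge0; move: H; rewrite -mulrN opprD opprK addrC.
Unshelve. all: by end_near.
Qed.

Lemma comp_quot m p (f : 'rV[R]_p -> R) (M : 'M[R]_(m, p)) (v x : 'rV[R]_m) :
  (fun h : R => h^-1 *: (((fun z => f (z *m M)) \o shift x) (h *: v) - f (x *m M))) =
  (fun h : R => h^-1 *: ((f \o shift (x *m M)) (h *: (v *m M)) - f (x *m M))).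
Proof. by apply: funext => h /=; rewrite mulmxDl scalemxAl. Qed.

Lemma comp_derivable m p (f : 'rV[R]_p -> R) (M : 'M[R]_(m, p)) (v x : 'rV[R]_m) :
  derivable f (x *m M) (v *m M) -> derivable (fun z => f (z *m M)) x v.
Proof. by rewrite /derivable comp_quot. Qed.

Lemma comp_derive m p (f : 'rV[R]_p -> R) (M : 'M[R]_(m, p)) (v x : 'rV[R]_m) :
  'D_v (fun z => f (z *m M)) x = 'D_(v *m M) f (x *m M).
Proof. by rewrite /derive comp_quot. Qed.

Lemma delta_entry p (X : 'M[R]_p) i j : (ebasis R i *m X *m (ebasis R j)^T) 0 0 = X i j.
Proof. by rewrite /ebasis trmx_delta -colE -rowE !mxE. Qed.

Lemma hess_comp m p (f : 'rV[R]_p -> R) (M : 'M[R]_(m, p)) z : C2 f ->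
  hessian (fun z => f (z *m M)) z = M *m hessian f (z *m M) *m M^T.
Proof.
move=> C2f; apply/matrixP => i j; rewrite /hessian mxE.
have -> : partial i (fun z => f (z *m M)) = (fun y => 'D_(ebasis R i *m M) f (y *m M)).
  by apply: funext => y; exact: comp_derive.
have -> : partial j (fun y => 'D_(ebasis R i *m M) f (y *m M)) z =
   'D_(ebasis R j *m M) ('D_(ebasis R i *m M) f) (z *m M).
  exact: (comp_derive _ _ ('D_(ebasis R i *m M) f)).
rewrite (second_deriv _ _ C2f _ _ _).2.
by rewrite trmx_mul !mulmxA -[RHS]delta_entry !mulmxA.
Qed.

Lemma gen_deriv p (f : 'rV[R]_p -> R) x v (c d : R) :
  (forall h : R, h != 0 -> h^-1 *: ((f \o shift x) (h *: v) - f x) = c + h * d) ->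
  derivable f x v /\ 'D_v f x = c.
Proof.
move=> Hq.
have H : (fun h : R => h^-1 *: ((f \o shift x) (h *: v) - f x)) @ 0^' --> c.
  apply/cvgrPdist_lt => e e0.
  have ed0 : 0 < e / (`|d| + 1) by rewrite divr_gt0 // ltr_wpDl.
  near=> h.
  have hn0 : h != 0 by near: h; exact: nbhs_dnbhs_neq.
  have hlt : `|h| < e / (`|d| + 1) by near: h; exact: dnbhs0_lt.
  rewrite Hq // opprD addrA subrr sub0r normrN normrM.
  apply: (le_lt_trans (y := `|h| * (`|d| + 1))); first by rewrite ler_wpM2l // lerDl.
  by rewrite -ltr_pdivlMr // ltr_wpDl.
split; first by apply/cvg_ex; eexists; exact: H.
exact: cvg_lim H.
Unshelve. all: by end_near.
Qed.

Definition bil p (A : 'M[R]_p) (u w : 'rV[R]_p) := (u *m A *m w^T) 0 0.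
Arguments bil {p}.

Lemma bil_expand p (A : 'M[R]_p) (v x : 'rV[R]_p) (h : R) :
  qform A (h *: v + x) = h * h * bil A v v + h * bil A v x + h * bil A x v + qform A x.
Proof.
rewrite /qform /bil linearD /= linearZ /= !mulmxDl !mulmxDr -!scalemxAl -!scalemxAr !mxE.
ring.
Qed.

Lemma bil_linl p (A : 'M[R]_p) (u v x : 'rV[R]_p) (h : R) :
  bil A u (h *: v + x) = h * bil A u v + bil A u x.
Proof. by rewrite /bil linearD /= linearZ /= !mulmxDr -!scalemxAr !mxE. Qed.

Lemma bil_linr p (A : 'M[R]_p) (u v x : 'rV[R]_p) (h : R) :
  bil A (h *: v + x) u = h * bil A v u + bil A x u.
Proof. by rewrite /bil !mulmxDl -!scalemxAl !mxE. Qed.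

Lemma qform_deriv p (A : 'M[R]_p) x v :
  derivable (qform A) x v /\ 'D_v (qform A) x = bil A v x + bil A x v.
Proof.
apply: (gen_deriv _ _ _ _ _ (bil A v v)) => h hn0 /=.
by rewrite bil_expand -[_ *: _]/(_ * _); field.
Qed.

Lemma qform_part p (A : 'M[R]_p) i y v :
  derivable (partial i (qform A)) y v /\
  'D_v (partial i (qform A)) y = bil A (ebasis R i) v + bil A v (ebasis R i).
Proof.
have -> : partial i (qform A) = fun y => bil A (ebasis R i) y + bil A y (ebasis R i).
  by apply: funext => z; exact: (qform_deriv _ _ _ _).2.
apply: (gen_deriv _ _ _ _ _ 0) => h hn0 /=.
by rewrite bil_linl bil_linr -[_ *: _]/(_ * _); field.
Qed.

Lemma qform_hess p (A : 'M[R]_p) z : hessian (qform A) z = A + A^T.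
Proof.
apply/matrixP => i j; rewrite /hessian !mxE.
transitivity (bil A (ebasis R i) (ebasis R j) + bil A (ebasis R j) (ebasis R i)).
  exact: (qform_part _ _ _ _ _).2.
by rewrite /bil !delta_entry.
Qed.

Definition D2 p (f : 'rV[R]_p -> R) :=
  (forall i y, derivable f y (ebasis R i)) /\
  (forall i j y, derivable (partial i f) y (ebasis R j)).
Arguments D2 {p}.

Lemma part_add p (f g : 'rV[R]_p -> R) i :
  (forall y, derivable f y (ebasis R i)) -> (forall y, derivable g y (ebasis R i)) ->
  partial i (fun z => f z + g z) = fun y => partial i f y + partial i g y.
Proof. by move=> df dg; apply: funext => y; exact: deriveD. Qed.

Lemma D2_add p (f g : 'rV[R]_p -> R) : D2 f -> D2 g -> D2 (fun z => f z + g z).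
Proof.
move=> [f1 f2] [g1 g2]; split; first by move=> i y; exact: derivableD.
by move=> i j y; rewrite part_add //; exact: derivableD.
Qed.

Lemma hess_add p (f g : 'rV[R]_p -> R) z : D2 f -> D2 g ->
  hessian (fun z => f z + g z) z = hessian f z + hessian g z.
Proof.
move=> [f1 f2] [g1 g2]; apply/matrixP => i j; rewrite /hessian !mxE part_add //.
exact: deriveD.
Qed.

Lemma D2_C2 p (f : 'rV[R]_p -> R) : C2 f -> D2 f.
Proof. by move=> [_ [dp [_ [ddp _]]]]. Qed.

Lemma D2_comp m p (f : 'rV[R]_p -> R) (M : 'M[R]_(m, p)) : C2 f -> D2 (fun z => f (z *m M)).
Proof.
move=> C2f; have [_ [dp [cp _]]] := C2f; split.
  move=> i y; apply: comp_derivable; exact: (total_deriv _ _ dp cp _ _).1.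
move=> i j y.
have -> : partial i (fun z => f (z *m M)) = (fun y => 'D_(ebasis R i *m M) f (y *m M)).
  by apply: funext => y'; exact: comp_derive.
apply: (comp_derivable _ _ ('D_(ebasis R i *m M) f)).
exact: (second_deriv _ _ C2f _ _ _).1.
Qed.

Lemma D2_qform p (A : 'M[R]_p) : D2 (qform A).
Proof.
split; first by move=> i y; exact: (qform_deriv _ _ _ _).1.
by move=> i j y; exact: (qform_part _ _ _ _ _).1.
Qed.

Lemma qformD p (A B : 'M[R]_p) w : qform (A + B) w = qform A w + qform B w.
Proof. by rewrite /qform mulmxDr mulmxDl mxE. Qed.

Lemma qform_conj m p (M : 'M[R]_(m, p)) H w : qform (M *m H *m M^T) w = qform H (w *m M).
Proof. by rewrite /qform trmx_mul !mulmxA. Qed.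

Lemma qform_tr p (A : 'M[R]_p) w : qform A^T w = qform A w.
Proof.
rewrite /qform; have <- : (w *m A^T *m w^T)^T 0 0 = (w *m A^T *m w^T) 0 0 by rewrite mxE.
by rewrite !trmx_mul trmxK trmxK mulmxA.
Qed.

Lemma contB p (f g : 'rV[R]_p -> R) : continuous f -> continuous g ->
  continuous (fun x => f x - g x).
Proof. by move=> cf cg x; apply: continuousB; [exact: cf | exact: cg]. Qed.

Lemma part_sub p (f g : 'rV[R]_p -> R) i :
  (forall y, derivable f y (ebasis R i)) -> (forall y, derivable g y (ebasis R i)) ->
  partial i (fun z => f z - g z) = fun y => partial i f y - partial i g y.
Proof. by move=> df dg; apply: funext => y; exact: deriveB. Qed.

Lemma C2B p (f g : 'rV[R]_p -> R) : C2 f -> C2 g -> C2 (fun x => f x - g x).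
Proof.
move=> [cf [df [cpf [ddf cdf]]]] [cg [dg [cpg [ddg cdg]]]].
split; first exact: contB.
split; first by move=> i y; exact: derivableB.
split; first by move=> i; rewrite part_sub //; exact: contB.
split; first by move=> i j y; rewrite part_sub //; exact: derivableB.
by move=> i j; rewrite part_sub // part_sub //; exact: contB.
Qed.

Lemma dotv_ge0 p (u : 'rV[R]_p) : 0 <= dotv u u.
Proof. by rewrite dotv_sum; apply: sumr_ge0 => i _; rewrite -expr2 sqr_ge0. Qed.

Lemma qform_scalar p (a : R) (w : 'rV[R]_p) : qform (a%:M) w = a * dotv w w.
Proof. by rewrite /qform mul_mx_scalar -scalemxAl mxE. Qed.
End Mx.

Local Close Scope classical_set_scope.

Theorem lemma3p2 (R : realType) (D : nat) (hD : (0 < D)%N)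
  (sigmaI sigmaE G : 'rV[R]_D -> R) (gammaI gammav : R) :
  C2 sigmaI -> C2 sigmaE -> C2 G ->
  (forall Xi, mx_posdef (hessian (fun x => sigmaI x - sigmaE x) Xi)) ->
  (forall y : 'rV[R]_D, exists Xi, gradient (fun x => sigmaI x - sigmaE x) Xi = y) ->
  (* grad G(tau) = - (grad Sigma)^{-1}(-tau), i.e. -grad G(tau) is the
     (unique) preimage of -tau under grad Sigma *)
  (forall tau : 'rV[R]_D,
      gradient (fun x => sigmaI x - sigmaE x) (- gradient G tau) = - tau) ->
  0 < gammav -> gammav < gammaI ->
  (forall Xi, mx_ge (hessian sigmaI Xi) (gammaI%:M)) ->
  (forall Xi, mx_ge (gammav%:M) (hessian (fun x => sigmaI x - sigmaE x) Xi)) ->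
  exists delta : R, 0 < delta /\
    forall z : 'rV[R]_(D + D), mx_ge (hessian (Psi sigmaI G) z) (delta%:M).
Proof.
move=> C2I C2E C2G hpd _ hgrad g0 glt hI hv.
have C2S := C2B _ _ _ _ C2I C2E.
have hpos : forall x d, 0 <= qform (hessian (fun x => sigmaI x - sigmaE x) x) d.
  move=> x d; have [->|dn0] := eqVneq d 0.
    by rewrite /qform mul0mx mxE big1 // => i _; rewrite mxE mul0r.
  exact/ltW/hpd.
have hub : forall x d, qform (hessian (fun x => sigmaI x - sigmaE x) x) d <= gammav * dotv d d.
  by move=> x d; rewrite -qform_scalar; exact: hv.
have GB := G_bound _ _ _ _ _ g0 C2S C2G hpos hub hgrad.
pose e := (gammaI + gammav) / 2.
have e0 : 0 < e by rewrite /e; lra.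
have ge : gammav < e by rewrite /e; lra.
have eg : e < gammaI by rewrite /e; lra.
pose del := Num.min (gammaI - e) (gammav^-1 - e^-1).
have d1 : del <= gammaI - e by rewrite /del ge_min lexx.
have d2 : del <= gammav^-1 - e^-1 by rewrite /del ge_min lexx orbT.
exists del; split.
  rewrite /del lt_min subr_gt0 eg /= subr_gt0.
  by rewrite ltf_pV2 // posrE.
move=> z w.
pose Ml : 'M[R]_(D + D, D) := col_mx 1%:M 0.
pose Mr : 'M[R]_(D + D, D) := col_mx 0 1%:M.
have EPsi : Psi sigmaI G = fun z => (sigmaI (z *m Ml) + qform (Ml *m Mr^T) z) + G (z *m Mr).
  apply: funext => y; rewrite /Psi /dotv /qform.
  have -> : (y *m (Ml *m Mr^T) *m y^T) = (y *m Ml) *m (y *m Mr)^T.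
    by rewrite trmx_mul !mulmxA.
  have -> : y *m Ml = lsubmx y.
    by rewrite -{1}(hsubmxK y) mul_row_col mulmx1 mulmx0 addr0.
  have -> : y *m Mr = rsubmx y.
    by rewrite -{1}(hsubmxK y) mul_row_col mulmx1 mulmx0 add0r.
  by [].
have D2I := D2_comp _ _ _ _ Ml C2I.
have D2G := D2_comp _ _ _ _ Mr C2G.
have D2Q := D2_qform _ _ (Ml *m Mr^T).
rewrite EPsi (hess_add _ _ _ (fun z0 => G (z0 *m Mr)) z (D2_add _ _ _ _ D2I D2Q) D2G).
rewrite (hess_add _ _ (fun z0 => sigmaI (z0 *m Ml)) (qform (Ml *m Mr^T)) z D2I D2Q).
rewrite !hess_comp // qform_hess !qformD !qform_conj qform_tr qform_scalar.
have Eq : qform (Ml *m Mr^T) w = dotv (w *m Ml) (w *m Mr).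
  by rewrite /qform /dotv trmx_mul !mulmxA.
have EL : w *m Ml = lsubmx w.
  by rewrite -{1}(hsubmxK w) mul_row_col mulmx1 mulmx0 addr0.
have ER : w *m Mr = rsubmx w.
  by rewrite -{1}(hsubmxK w) mul_row_col mulmx1 mulmx0 add0r.
have Ew : dotv w w = dotv (w *m Ml) (w *m Ml) + dotv (w *m Mr) (w *m Mr).
  rewrite EL ER /dotv -{1 2}(hsubmxK w) tr_row_mx mul_row_col mxE.
  by [].
have h1 := hI (z *m Ml) (w *m Ml); rewrite qform_scalar in h1.
have h2 := GB (z *m Mr) (w *m Mr).
have h3 := dotv_ge0 _ _ (e *: (w *m Ml) + w *m Mr).
rewrite !dotvDl !dotvDr !dotvZl !dotvZr (dotvC _ _ (w *m Mr)) in h3.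
rewrite Eq Ew.
move: h1 h2 h3.
move: (qform (hessian sigmaI (z *m Ml)) (w *m Ml)) (qform (hessian G (z *m Mr)) (w *m Mr)) => A1 A3.
have X0 := dotv_ge0 _ _ (w *m Ml).
have Y0 := dotv_ge0 _ _ (w *m Mr).
move: X0 Y0.
move: (dotv (w *m Ml) (w *m Ml)) (dotv (w *m Mr) (w *m Mr)) (dotv (w *m Ml) (w *m Mr)) => X Y Z X0 Y0 h1 h2 h3.
have f1 : del * X <= (gammaI - e) * X by rewrite ler_wpM2r.
have f2 : del * Y <= (gammav^-1 - e^-1) * Y by rewrite ler_wpM2r.
have f3 : 0 <= e * X + 2 * Z + e^-1 * Y.
  have -> : e * X + 2 * Z + e^-1 * Y = e^-1 * (e * (e * X) + e * Z + (e * Z + Y)).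
    by field; rewrite gt_eqF.
  by rewrite mulr_ge0 // invr_ge0 ltW.
move: h2; rewrite [Y / gammav]mulrC => h2.
lra.
Qed.
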